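(* Let $S,T$ be totally ordered sets and $M\colon S\times T\to\mathbf{Vec}$ pointwise finite-dimensional, middle exact and indecomposable. If there exist $x\le x'$ in $S$ and $y\le y'$ in $T$ such that, with $a=(x,y)$, $b=(x,y')$, $c=(x',y)$, $\ker M(a\le b)\cap\ker M(a\le c)\neq0$, then $M\cong k_B$ for a block $B$ of type db.
   Context: $S\times T$ has the product order; modules are functors to $k$-vector spaces with structure maps $M(p\le q)$. Middle exact: for all $x\le x'$, $y\le y'$ with $a=(x,y),b=(x,y'),c=(x',y),d=(x',y')$, the sequence $M_a\to M_b\oplus M_c\to M_d$ with maps $(M(a\le b),M(a\le c))$ and $M(b\le d)-M(c\le d)$ is exact at the middle. A block of type db is a set $J_S\times J_T$ where $J_S\subseteq S$ and $J_T\subseteq T$ are non-empty downward-closed subsets. $k_B$ is $k$ on $B$, $0$ elsewhere, with identity maps within $B$ and zero otherwise. *)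

(* Defs.v *)
From HB Require Import structures.
From mathcomp Require Import all_boot all_order all_algebra.
Set Implicit Arguments. Unset Strict Implicit. Unset Printing Implicit Defensive.
Import Order.TTheory GRing.Theory.
Local Open Scope ring_scope.

(* A (pointwise finite-dimensional) module over S x T, given concretely:
   M(x,y) = k^(pdim x y) (row vectors), and for (x,y) <= (x',y') the
   structure map M((x,y) <= (x',y')) acts by v |-> v *m pmor x y x' y'.
   Values of pmor on non-comparable pairs are irrelevant (never used). *)
Record pmod (k : fieldType) (dS dT : Order.disp_t)
    (S : orderType dS) (T : orderType dT) := PMod {
  pdim : S -> T -> nat;
  pmor : forall (x : S) (y : T) (x' : S) (y' : T),
           'M[k]_(pdim x y, pdim x' y')
}.

Section Defs.
Variables (k : fieldType) (dS dT : Order.disp_t)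
  (S : orderType dS) (T : orderType dT).

Definition is_pmod (M : pmod k S T) : Prop :=
  (forall x y, pmor M x y x y = 1%:M) /\
  (forall x y x' y' x'' y'',
     (x <= x')%O -> (x' <= x'')%O -> (y <= y')%O -> (y' <= y'')%O ->
     pmor M x y x'' y'' = pmor M x y x' y' *m pmor M x' y' x'' y'').

Definition pmod_hom (M N : pmod k S T)
    (f : forall x y, 'M[k]_(pdim M x y, pdim N x y)) : Prop :=
  forall x y x' y', (x <= x')%O -> (y <= y')%O ->
    pmor M x y x' y' *m f x' y' = f x y *m pmor N x y x' y'.

Definition pmod_iso (M N : pmod k S T) : Prop :=
  exists (f : forall x y, 'M[k]_(pdim M x y, pdim N x y))
         (g : forall x y, 'M[k]_(pdim N x y, pdim M x y)),
    pmod_hom f /\ pmod_hom g /\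
    forall x y, f x y *m g x y = 1%:M /\ g x y *m f x y = 1%:M.

Definition pmod_dsum (N1 N2 : pmod k S T) : pmod k S T :=
  @PMod k dS dT S T (fun x y => (pdim N1 x y + pdim N2 x y)%N)
    (fun x y x' y' => block_mx (pmor N1 x y x' y') 0 0 (pmor N2 x y x' y')).

Definition pmod_zero (N : pmod k S T) : Prop := forall x y, pdim N x y = 0%N.

Definition indecomposable (M : pmod k S T) : Prop :=
  ~ pmod_zero M /\
  forall N1 N2 : pmod k S T, is_pmod N1 -> is_pmod N2 ->
    pmod_iso M (pmod_dsum N1 N2) -> pmod_zero N1 \/ pmod_zero N2.

(* middle exactness: with a=(x,y), b=(x,y'), c=(x',y), d=(x',y'), the
   sequence M_a -> M_b (+) M_c -> M_d,  v |-> (vA_ab, vA_ac),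
   (u,w) |-> uA_bd - wA_cd, is exact at the middle (image = kernel). *)
Definition middle_exact (M : pmod k S T) : Prop :=
  forall x x' y y', (x <= x')%O -> (y <= y')%O ->
    forall w : 'rV[k]_(pdim M x y' + pdim M x' y),
      w *m col_mx (pmor M x y' x' y') (- pmor M x' y x' y') = 0 <->
      exists v : 'rV[k]_(pdim M x y),
        w = v *m row_mx (pmor M x y x y') (pmor M x y x' y).

Definition db_block (JS : S -> bool) (JT : T -> bool) : Prop :=
  (exists s, JS s) /\ (forall s s', (s' <= s)%O -> JS s -> JS s') /\
  (exists t, JT t) /\ (forall t t', (t' <= t)%O -> JT t -> JT t').

Definition kB (JS : S -> bool) (JT : T -> bool) : pmod k S T :=
  @PMod k dS dT S T (fun x y => if JS x && JT y then 1%N else 0%N)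
    (fun x y x' y' => \matrix_(i, j)
       (if [&& JS x, JT y, JS x' & JT y'] then 1 else 0)).

End Defs.

(* Main.v *)
Require Import Defs.
From HB Require Import structures.
From mathcomp Require Import all_boot all_order all_algebra.
From mathcomp Require Import boolp classical_sets.

Set Implicit Arguments. Unset Strict Implicit. Unset Printing Implicit Defensive.
Import GRing.Theory.
Local Open Scope ring_scope.

Section Aff.
Variable k : fieldType.

Lemma subB_mx m1 m2 n (A B : 'M[k]_(m1, n)) (C : 'M_(m2, n)) :
  (A <= C)%MS -> (B <= C)%MS -> (A - B <= C)%MS.
Proof.
move=> hA hB; apply: addmx_sub => //.
by rewrite -scaleN1r scalemx_sub.
Qed.

Definition affS n (P : 'rV[k]_n -> Prop) :=
  exists (u0 : 'rV_n) (m : nat) (D : 'M_(m, n)), forall u, P u <-> (u - u0 <= D)%MS.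

Definition adim n (P : 'rV[k]_n -> Prop) r :=
  exists (u0 : 'rV_n) (m : nat) (D : 'M_(m, n)),
    (forall u, P u <-> (u - u0 <= D)%MS) /\ \rank D = r.

Lemma aff_sub n (P Q : 'rV[k]_n -> Prop) u0 u1 m1 m2 (D : 'M_(m1, n)) (E : 'M_(m2, n)) :
  (forall u, P u <-> (u - u0 <= D)%MS) -> (forall u, Q u <-> (u - u1 <= E)%MS) ->
  (forall u, P u -> Q u) -> (D <= E)%MS.
Proof.
move=> hP hQ PQ; apply/row_subP => i.
have h0 : Q u0 by apply/PQ/hP; rewrite subrr sub0mx.
have h1 : Q (u0 + row i D) by apply/PQ/hP; rewrite addrC addKr row_sub.
move/hQ: h0 => h0; move/hQ: h1 => h1.
have -> : row i D = (u0 + row i D - u1) - (u0 - u1).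
  by rewrite opprB addrA subrK addrC addKr.
exact: subB_mx.
Qed.

Lemma aff_eq n (P Q : 'rV[k]_n -> Prop) u0 u1 m1 m2 (D : 'M_(m1, n)) (E : 'M_(m2, n)) :
  (forall u, P u <-> (u - u0 <= D)%MS) -> (forall u, Q u <-> (u - u1 <= E)%MS) ->
  (forall u, P u -> Q u) -> (\rank E <= \rank D)%N -> forall u, Q u -> P u.
Proof.
move=> hP hQ PQ hr.
have sDE := aff_sub hP hQ PQ.
have sED : (E <= D)%MS.
  have := mxrank_leqif_sup sDE; case=> _ <-.
  by rewrite eqn_leq hr mxrankS.
move=> u /hQ hu; apply/hP.
have h0 : Q u0 by apply/PQ/hP; rewrite subrr sub0mx.
move/hQ: h0 => h0.
have -> : u - u0 = (u - u1) - (u0 - u1) by rewrite opprB addrA subrK.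
by apply: subB_mx; apply: submx_trans sED.
Qed.

Lemma affine_adim n (P : 'rV[k]_n -> Prop) : affS P -> exists r, adim P r.
Proof. by case=> u0 [m [D h]]; exists (\rank D), u0, m, D. Qed.

Lemma adim_affine n (P : 'rV[k]_n -> Prop) r : adim P r -> affS P.
Proof. by case=> u0 [m [D [h _]]]; exists u0, m, D. Qed.

Lemma dir_min n (J : Type) (Q : J -> 'rV[k]_n -> Prop) (j0 : J) :
  (forall j, affS (Q j)) -> (forall j, exists u, Q j u) ->
  (forall j j', exists j'', forall u, Q j'' u -> Q j u /\ Q j' u) ->
  exists j1, forall j u, Q j1 u -> Q j u.
Proof.
move=> haff hne hdir.
pose Pr r := `[< exists j, adim (Q j) r >].
have exP : exists r, Pr r.
  by have [r hr] := affine_adim (haff j0); exists r; apply/asboolP; exists j0.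
case: (ex_minnP exP) => r0 /asboolP [j1 hj1] hmin.
exists j1 => j u hu.
have [j'' hj''] := hdir j1 j.
have [r'' hr''] := affine_adim (haff j'').
have hle : (r0 <= r'')%N by apply: hmin; apply/asboolP; exists j''.
case: hj1 => u1 [m1 [D1 [h1 e1]]].
case: hr'' => u2 [m2 [D2 [h2 e2]]].
have hsub : forall u, Q j'' u -> Q j1 u by move=> w /hj''[].
have := aff_eq h2 h1 hsub; rewrite e1 e2 => /(_ hle) hback.
by have [] := hj'' u (hback u hu).
Qed.

Lemma aff_eqn n m (C : 'M[k]_(n, m)) (d : 'rV_m) :
  (exists u, u *m C = d) -> affS (fun u => u *m C = d).
Proof.
case=> z hz; exists z, n, (kermx C) => u.
rewrite sub_kermx mulmxBl hz subr_eq0; split => [->//|/eqP//].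
Qed.

Lemma aff_img n n' (P : 'rV[k]_n -> Prop) (G : 'M_(n, n')) :
  affS P -> affS (fun v => exists z, P z /\ z *m G = v).
Proof.
case=> u0 [m [D h]]; exists (u0 *m G), m, (D *m G) => v; split.
  by case=> z [/h hz <-]; rewrite -mulmxBl submxMr.
case/submxP=> x hx; exists (u0 + x *m D); split.
  by apply/h; rewrite addrC addKr submxMl.
by rewrite mulmxDl -mulmxA -hx addrC subrK.
Qed.

Lemma aff_cap n n' (P : 'rV[k]_n -> Prop) (G : 'M_(n, n')) e :
  affS P -> (exists z, P z /\ z *m G = e) -> affS (fun z => P z /\ z *m G = e).
Proof.
case=> u0 [m [D h]] [z1 [hz1 ez1]].
exists z1, n, (D :&: kermx G)%MS => u.
rewrite sub_capmx sub_kermx mulmxBl ez1 subr_eq0; split.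
  case=> /h hu ->; rewrite eqxx andbT.
  have -> : u - z1 = (u - u0) - (z1 - u0) by rewrite opprB addrA subrK.
  by apply: subB_mx => //; apply/h.
case/andP=> hs /eqP ->; split => //; apply/h.
have -> : u - u0 = (u - z1) + (z1 - u0) by rewrite addrA subrK.
by apply: addmx_sub => //; apply/h.
Qed.

Lemma aff_ext n (P Q : 'rV[k]_n -> Prop) : (forall u, P u <-> Q u) -> affS P -> affS Q.
Proof. by move=> e [u0 [m [D h]]]; exists u0, m, D => u; rewrite -e. Qed.

End Aff.
Unset Implicit Arguments.
Section Thread.
Variables (k : fieldType) (I : Type) (le : I -> I -> Prop).
Hypothesis le_refl : forall i, le i i.
Hypothesis le_trans : forall {i j l}, le i j -> le j l -> le i l.
Hypothesis le_dir : forall i j, exists l, le l i /\ le l j.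
Variables (n : I -> nat) (F : forall i j, 'M[k]_(n i, n j)).
Hypothesis F_id : forall i, F i i = 1%:M.
Hypothesis F_comp : forall {i j l}, le i j -> le j l -> F i l = F i j *m F j l.
Variable L : forall i, 'rV[k]_(n i) -> Prop.
Hypothesis L_aff : forall i, affS (L i).
Hypothesis L_ne : forall i, exists u, L i u.
Hypothesis L_map : forall i j u, le i j -> L i u -> L j (u *m F i j).

Definition Good (A : forall i, 'rV[k]_(n i) -> Prop) :=
  [/\ forall i, affS (A i), forall i, exists u, A i u,
      forall i u, A i u -> L i u &
      forall i j u, le i j -> A i u -> A j (u *m F i j)].

Definition GT := {A | Good A}.
Definition GR (A B : GT) : bool := `[< forall i u, sval B i u -> sval A i u >].

Lemma goodL : Good L. Proof. by split. Qed.

Lemma chain_ub (C : set GT) : total_on C (fun x y => GR x y) ->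
  exists t, forall s, C s -> GR s t.
Proof.
move=> Ctot.
case: (pselect (exists s, C s)) => [[s0 Cs0]|nC]; last first.
  by exists (exist _ L goodL) => s Cs; case: nC; exists s.
pose Lam i u := forall s, C s -> sval s i u.
have key : forall i, exists s1, C s1 /\ forall u, sval s1 i u -> Lam i u.
  move=> i.
  pose J := {s | C s}.
  pose Q (j : J) := sval (sval j) i.
  have := @dir_min k (n i) J Q (exist _ s0 Cs0).
  case.
  - by move=> [s Cs]; rewrite /Q /=; case: (svalP s).
  - by move=> [s Cs]; rewrite /Q /=; case: (svalP s).
  - move=> [s Cs] [s' Cs']; case: (Ctot s s' Cs Cs') => /asboolP h.
      by exists (exist _ s' Cs') => u /= hu; split => //; apply: h.
    by exists (exist _ s Cs) => u /= hu; split => //; apply: h.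
  - move=> [s1 Cs1] h1; exists s1; split => // u hu s Cs.
    exact: (h1 (exist _ s Cs) u hu).
have gL : Good Lam.
  split.
  - move=> i; have [s1 [Cs1 h]] := key i.
    apply: (@aff_ext _ _ (sval s1 i)); last by case: (svalP s1).
    by move=> u; split; [apply: h|move=> /(_ s1 Cs1)].
  - move=> i; have [s1 [Cs1 h]] := key i.
    by case: (svalP s1) => _ /(_ i) [u hu] _ _; exists u; apply: h.
  - move=> i u /(_ s0 Cs0); case: (svalP s0) => _ _ hL _; exact: hL.
  - move=> i j u hij hu s Cs; case: (svalP s) => _ _ _ hm; exact: hm _ _ _ hij (hu s Cs).
by exists (exist _ Lam gL) => s Cs; apply/asboolP => i u /= /(_ s Cs).
Qed.

Lemma minimal_exists : exists A : GT, premaximal (fun x y => GR x y) A.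
Proof.
apply: (@ZL_preorder GT (exist _ L goodL) GR).
- by move=> t; apply/asboolP.
- by move=> r s t /asboolP h1 /asboolP h2; apply/asboolP => i u /h2 /h1.
- exact: chain_ub.
Qed.

Section Min.
Variable A : GT.
Hypothesis Amin : premaximal (fun x y => GR x y) A.
Let A0 := sval A.
Let gA : Good A0 := svalP A.

Lemma A_sub (B : forall i, 'rV[k]_(n i) -> Prop) : Good B ->
  (forall i u, B i u -> A0 i u) -> forall i u, A0 i u -> B i u.
Proof.
move=> gB hBA.
have := Amin (exist _ B gB); rewrite /GR /=.
by move=> h; have /asboolP := h (introT (asboolP _) hBA).
Qed.

Lemma A_surj {i j u} : le i j -> A0 j u -> exists z, A0 i z /\ z *m F i j = u.
Proof.
case: gA => Aaff Ane AL Amap.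
pose A' j u := A0 j u /\ forall i, le i j -> exists z, A0 i z /\ z *m F i j = u.
have key : forall j, exists i1, le i1 j /\
   forall u, (exists z, A0 i1 z /\ z *m F i1 j = u) -> A' j u.
  move=> j0.
  pose J := {i | le i j0}.
  pose Q (x : J) v := exists z, A0 (sval x) z /\ z *m F (sval x) j0 = v.
  have := @dir_min k (n j0) J Q (exist _ j0 (le_refl j0)).
  case.
  - by move=> x; apply: aff_img.
  - by move=> [x hx]; have [z hz] := Ane x; exists (z *m F x j0), z.
  - move=> [x hx] [x' hx']; have [l [hl hl']] := le_dir x x'.
    exists (exist _ l (le_trans hl hx)) => v [z [hz <-]] /=; split.
      exists (z *m F l x); split; first exact: Amap.
      by rewrite -mulmxA -F_comp.
    exists (z *m F l x'); split; first exact: Amap.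
    by rewrite -mulmxA -F_comp.
  - move=> [i1 hi1] h1; exists i1; split => // v hv; split.
      by case: hv => z [hz <-]; exact: Amap.
    by move=> i2 hi; exact: (h1 (exist _ i2 hi) v hv).
have gA' : Good A'.
  split.
  - move=> j0; have [i1 [hi1 h]] := key j0.
    apply: (@aff_ext _ _ (fun v => exists z, A0 i1 z /\ z *m F i1 j0 = v)); last exact: aff_img.
    by move=> v; split; [apply: h|case=> _ /(_ i1 hi1)].
  - move=> j0; have [i1 [hi1 h]] := key j0.
    by have [z hz] := Ane i1; exists (z *m F i1 j0); apply: h; exists z.
  - by move=> j0 v [/AL].
  - move=> i0 j0 v hij [hv hl]; split; first exact: Amap.
    move=> l hl0; have [m [hm1 hm2]] := le_dir l i0.
    have [z0 [hz0 ez0]] := hl m hm2.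
    exists (z0 *m F m l); split; first exact: Amap.
    by rewrite -mulmxA -(F_comp hm1 hl0) -ez0 -mulmxA -F_comp // (le_trans hm2 hij).
move=> hij hu.
have := A_sub _ gA' (fun i u h => proj1 h) _ _ hu; case=> _ /(_ i hij) //.
Qed.

Lemma A_single {i0 e u} : A0 i0 e -> A0 i0 u -> u = e.
Proof.
case: gA => Aaff Ane AL Amap he hu.
pose A'' j v := forall l, le l j -> le l i0 ->
   exists z, A0 l z /\ z *m F l i0 = e /\ z *m F l j = v.
have key : forall j, exists l1, le l1 j /\ le l1 i0 /\ forall v,
   (exists z, A0 l1 z /\ z *m F l1 i0 = e /\ z *m F l1 j = v) -> A'' j v.
  move=> j0.
  have [l0 [hl0 hl0']] := le_dir j0 i0.
  pose J := {l | le l j0 /\ le l i0}.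
  pose Q (x : J) v := exists z, (A0 (sval x) z /\ z *m F (sval x) i0 = e) /\ z *m F (sval x) j0 = v.
  have := @dir_min k (n j0) J Q (exist _ l0 (conj hl0 hl0')).
  case.
  - move=> [x [hx hx']]; apply: aff_img; apply: aff_cap => //.
    exact: A_surj.
  - move=> [x [hx hx']]; have [z [hz ez]] := A_surj hx' he.
    by exists (z *m F x j0), z.
  - move=> [x [hx hx']] [x' [hy hy']]; have [l [hl hl']] := le_dir x x'.
    exists (exist _ l (conj (le_trans hl hx) (le_trans hl hx'))) => v [z [[hz ez] <-]] /=; split.
      exists (z *m F l x); split; [split|]; first exact: Amap.
        by rewrite -mulmxA -F_comp.
      by rewrite -mulmxA -F_comp.
    exists (z *m F l x'); split; [split|]; first exact: Amap.
      by rewrite -mulmxA -F_comp.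
    by rewrite -mulmxA -F_comp.
  - move=> [l1 [hl1 hl1']] h1; exists l1; split => //; split => // v [z [hz [ez ev]]] l hl hl'.
    have := h1 (exist _ l (conj hl hl')) v; case.
      by exists z; split.
    by move=> z' [[hz' ez'] ev']; exists z'.
have gA'' : Good A''.
  split.
  - move=> j0; have [l1 [hl1 [hl1' h]]] := key j0.
    apply: (@aff_ext _ _ (fun v => exists z, (A0 l1 z /\ z *m F l1 i0 = e) /\ z *m F l1 j0 = v)).
      move=> v; split; first by case=> z [[? ?] ?]; apply: h; exists z.
      by move=> /(_ l1 hl1 hl1') [z [? [? ?]]]; exists z.
    apply: aff_img; apply: aff_cap => //; exact: A_surj.
  - move=> j0; have [l1 [hl1 [hl1' h]]] := key j0.
    have [z [hz ez]] := A_surj hl1' he.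
    by exists (z *m F l1 j0); apply: h; exists z.
  - move=> j0 v hv; have [l0 [hl0 hl0']] := le_dir j0 i0.
    have [z [hz [_ <-]]] := hv l0 hl0 hl0'; apply: AL; exact: Amap.
  - move=> i1 j0 v hij hv l hl hl'.
    have [m [hm1 hm2]] := le_dir l i1.
    have [z0 [hz0 [ez0 ev0]]] := hv m hm2 (le_trans hm1 hl').
    exists (z0 *m F m l); split; first exact: Amap.
    split; first by rewrite -mulmxA -F_comp.
    by rewrite -mulmxA -(F_comp hm1 hl) -ev0 -mulmxA -F_comp // (le_trans hm2 hij).
have sub : forall j v, A'' j v -> A0 j v.
  move=> j0 v hv; have [l0 [hl0 hl0']] := le_dir j0 i0.
  by have [z [hz [_ <-]]] := hv l0 hl0 hl0'; exact: Amap.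
have := A_sub _ gA'' sub _ _ hu i0 (le_refl i0) (le_refl i0).
by case=> z [_ []]; rewrite F_id !mulmx1 => -> ->.
Qed.

End Min.

Theorem thread : exists u : forall i, 'rV[k]_(n i),
  (forall i, L i (u i)) /\ (forall i j, le i j -> u i *m F i j = u j).
Proof.
have [A Amin] := minimal_exists.
have [Aaff Ane AL Amap] := svalP A.
exists (fun i => sval (cid (Ane i))); split.
  by move=> i; apply: AL; exact: (svalP (cid (Ane i))).
move=> i j hij; apply: (A_single A Amin).
  exact: (svalP (cid (Ane j))).
by apply: Amap hij _; exact: (svalP (cid (Ane i))).
Qed.

End Thread.
Set Implicit Arguments.

Set Implicit Arguments. Unset Strict Implicit. Unset Printing Implicit Defensive.
Import Order.TTheory GRing.Theory.
Local Open Scope ring_scope.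

Section Retract.
Variables (k : fieldType) (dS dT : Order.disp_t) (S : orderType dS) (T : orderType dT).
Variables (M N1 : pmod k S T).
Variable W : forall x y, 'M[k]_(pdim N1 x y, pdim M x y).
Variable C : forall x y, 'M[k]_(pdim M x y, pdim N1 x y).
Hypothesis hW : @pmod_hom _ _ _ _ _ N1 M W.
Hypothesis hC : @pmod_hom _ _ _ _ _ M N1 C.
Hypothesis WC : forall x y, W x y *m C x y = 1%:M.

Definition P x y := 1%:M - C x y *m W x y.
Definition K : forall x y, 'M_(\rank (P x y), pdim M x y) := locked (fun x y => row_base (P x y)).
Definition G : forall x y, 'M_(pdim M x y, \rank (P x y)) := locked (fun x y => col_base (P x y)).

Lemma GK x y : G x y *m K x y = P x y. Proof. by rewrite /G /K -!lock mulmx_base. Qed.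
Lemma PP x y : P x y *m P x y = P x y.
Proof.
rewrite /P mulmxBl mul1mx mulmxBr mulmx1 mulmxA -(mulmxA (C x y)) WC mulmx1.
by rewrite subrr subr0.
Qed.
Lemma Gcancel x y m (X Y : 'M_(_, m)) : G x y *m X = G x y *m Y -> X = Y.
Proof. by rewrite /G -lock; exact: (row_full_inj (col_base_full _)). Qed.
Lemma Kcancel x y m (X Y : 'M_(m, _)) : X *m K x y = Y *m K x y -> X = Y.
Proof. by rewrite /K -lock; exact: (row_free_inj (row_base_free _)). Qed.
Lemma KG x y : K x y *m G x y = 1%:M.
Proof.
apply: (@Kcancel x y); rewrite mul1mx; apply: (@Gcancel x y).
by rewrite !mulmxA GK -mulmxA GK PP.
Qed.
Lemma WG x y : W x y *m G x y = 0.
Proof.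
apply: (@Kcancel x y); rewrite mul0mx -mulmxA GK /P mulmxBr mulmx1 mulmxA WC mul1mx.
by rewrite subrr.
Qed.
Lemma KC x y : K x y *m C x y = 0.
Proof.
apply: (@Gcancel x y); rewrite mulmx0 mulmxA GK /P mulmxBl mul1mx -mulmxA WC mulmx1.
by rewrite subrr.
Qed.

Definition N2 : pmod k S T :=
  @PMod k dS dT S T (fun x y => \rank (P x y))
    (fun x y x' y' => K x y *m pmor M x y x' y' *m G x' y').

Lemma KAP x y x' y' : (x <= x')%O -> (y <= y')%O ->
  K x y *m pmor M x y x' y' *m P x' y' = K x y *m pmor M x y x' y'.
Proof.
move=> hx hy; rewrite /P mulmxBr mulmx1 -!mulmxA (mulmxA (pmor M _ _ _ _)) hC //.
by rewrite !mulmxA KC !mul0mx subr0.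
Qed.

Lemma N2_pmod : is_pmod M -> is_pmod N2.
Proof.
case=> hid hcomp; split => [x y|x y x' y' x'' y'' h1 h2 h3 h4] /=.
  by rewrite hid mulmx1 KG.
by rewrite !mulmxA -(mulmxA _ (G x' y')) GK (KAP h1 h3) (hcomp _ _ x' y') // !mulmxA.
Qed.

Lemma retract_dsum : pmod_iso M (pmod_dsum N1 N2).
Proof.
exists (fun x y => row_mx (C x y) (G x y)), (fun x y => col_mx (W x y) (K x y)).
split; [|split].
- move=> x y x' y' hx hy /=.
  rewrite mul_mx_row mul_row_block !mulmx0 addr0 add0r hC //; congr row_mx.
  have e : C x y *m (W x y *m (pmor M x y x' y' *m G x' y')) = 0.
    by rewrite (mulmxA (W x y)) -hW // -mulmxA WG !mulmx0.
  by rewrite !mulmxA GK /P !mulmxBl mul1mx -!mulmxA e subr0.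
- move=> x y x' y' hx hy /=.
  rewrite mul_block_col mul_col_mx !mul0mx addr0 add0r hW //; congr col_mx.
  by rewrite -(mulmxA _ (G x' y')) GK KAP.
- move=> x y; split.
    by rewrite mul_row_col GK /P addrC subrK.
  by rewrite mul_col_row WC KC WG KG -scalar_mx_block.
Qed.

Lemma retract_iso : is_pmod M -> is_pmod N1 -> indecomposable M -> ~ pmod_zero N1 ->
  pmod_iso M N1.
Proof.
move=> pM pN1 [_ hind] nz.
case: (hind N1 N2 pN1 (N2_pmod pM) retract_dsum) => // z2.
have CW : forall x y, C x y *m W x y = 1%:M.
  move=> x y; have := z2 x y; rewrite /= => /eqP; rewrite mxrank_eq0 /P subr_eq0.
  by move/eqP.
exists C, W; split => //; split => // x y; split => //.
Qed.
End Retract.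

Set Implicit Arguments. Unset Strict Implicit. Unset Printing Implicit Defensive.
Import Order.TTheory GRing.Theory.
Local Open Scope ring_scope.

Section Basic.
Variables (k : fieldType) (dS dT : Order.disp_t) (S : orderType dS) (T : orderType dT).
Variable M : pmod k S T.
Hypothesis pM : is_pmod M.
Hypothesis meM : middle_exact M.
Local Notation mo := (pmor M).

Lemma mo_id x y : mo x y x y = 1%:M. Proof. by case: pM. Qed.
Lemma mo_comp x y x' y' x'' y'' : (x <= x')%O -> (x' <= x'')%O -> (y <= y')%O -> (y' <= y'')%O ->
  mo x y x'' y'' = mo x y x' y' *m mo x' y' x'' y''.
Proof. by case: pM => _ h; apply: h. Qed.

Lemma lift_v x x' t y (u : 'rV[k]_(pdim M x y)) : (x <= x')%O -> (t <= y)%O ->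
  u *m mo x y x' y = 0 ->
  exists u' : 'rV_(pdim M x t), u' *m mo x t x y = u /\ u' *m mo x t x' t = 0.
Proof.
move=> hx ht hu.
have := (meM hx ht (row_mx u 0)).1.
rewrite mul_row_col hu mul0mx addr0 => /(_ erefl) [v].
rewrite mul_mx_row => /eq_row_mx [e1 e2]; exists v; split; by [rewrite -e1|rewrite -e2].
Qed.

Lemma lift_h s x y y' (u : 'rV[k]_(pdim M x y)) : (s <= x)%O -> (y <= y')%O ->
  u *m mo x y x y' = 0 ->
  exists u' : 'rV_(pdim M s y), u' *m mo s y x y = u /\ u' *m mo s y s y' = 0.
Proof.
move=> hs hy hu.
have := (meM hs hy (row_mx 0 u)).1.
rewrite mul_row_col mulmxN hu mul0mx add0r oppr0 => /(_ erefl) [v].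
rewrite mul_mx_row => /eq_row_mx [e1 e2]; exists v; split; by [rewrite -e2|rewrite -e1].
Qed.

Lemma split_sq x0 y0 s t (v : 'rV[k]_(pdim M x0 y0)) : (x0 <= s)%O -> (y0 <= t)%O ->
  v *m mo x0 y0 s t = 0 ->
  exists z : 'rV_(pdim M x0 y0), z *m mo x0 y0 x0 t = v *m mo x0 y0 x0 t /\ z *m mo x0 y0 s y0 = 0.
Proof.
move=> hs ht hv.
have := (meM hs ht (row_mx (v *m mo x0 y0 x0 t) 0)).1.
rewrite mul_row_col mul0mx addr0 -mulmxA -mo_comp // hv => /(_ erefl) [z].
rewrite mul_mx_row => /eq_row_mx [e1 e2]; exists z; split; by [rewrite -e1|rewrite -e2].
Qed.

Lemma stab_h s t (C : S -> bool) : (exists s1, C s1) -> (forall s', C s' -> (s <= s')%O) ->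
  exists s0, C s0 /\ forall u : 'rV[k]_(pdim M s t), u *m mo s t s0 t = 0 ->
     forall s', C s' -> u *m mo s t s' t = 0.
Proof.
move=> [s1 Cs1] hC.
pose Pr r := `[< exists s', C s' /\ \rank (kermx (mo s t s' t)) = r >].
have exP : exists r, Pr r by exists (\rank (kermx (mo s t s1 t))); apply/asboolP; exists s1.
case: (ex_minnP exP) => r0 /asboolP [s0 [Cs0 e0]] hmin.
exists s0; split => // u hu s' Cs'.
case: (leP s0 s') => h.
  by rewrite (@mo_comp s t s0 t s' t) ?hC // mulmxA hu mul0mx.
have sub : (kermx (mo s t s' t) <= kermx (mo s t s0 t))%MS.
  rewrite sub_kermx (@mo_comp s t s' t s0 t) ?hC ?(ltW h) // mulmxA.
  by have /sub_kermxP -> := submx_refl (kermx (mo s t s' t)); rewrite mul0mx.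
have hr : (r0 <= \rank (kermx (mo s t s' t)))%N by apply: hmin; apply/asboolP; exists s'.
have sub2 : (kermx (mo s t s0 t) <= kermx (mo s t s' t))%MS.
  case: (mxrank_leqif_sup sub) => _ <-; rewrite eqn_leq mxrankS //= e0 //.
apply/sub_kermxP; apply: submx_trans sub2; exact/sub_kermxP.
Qed.

Lemma stab_v s t (C : T -> bool) : (exists t1, C t1) -> (forall t', C t' -> (t <= t')%O) ->
  exists t0, C t0 /\ forall u : 'rV[k]_(pdim M s t), u *m mo s t s t0 = 0 ->
     forall t', C t' -> u *m mo s t s t' = 0.
Proof.
move=> [t1 Ct1] hC.
pose Pr r := `[< exists t', C t' /\ \rank (kermx (mo s t s t')) = r >].
have exP : exists r, Pr r by exists (\rank (kermx (mo s t s t1))); apply/asboolP; exists t1.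
case: (ex_minnP exP) => r0 /asboolP [t0 [Ct0 e0]] hmin.
exists t0; split => // u hu t' Ct'.
case: (leP t0 t') => h.
  by rewrite (@mo_comp s t s t0 s t') ?hC // mulmxA hu mul0mx.
have sub : (kermx (mo s t s t') <= kermx (mo s t s t0))%MS.
  rewrite sub_kermx (@mo_comp s t s t' s t0) ?hC ?(ltW h) // mulmxA.
  by have /sub_kermxP -> := submx_refl (kermx (mo s t s t')); rewrite mul0mx.
have hr : (r0 <= \rank (kermx (mo s t s t')))%N by apply: hmin; apply/asboolP; exists t'.
have sub2 : (kermx (mo s t s t0) <= kermx (mo s t s t'))%MS.
  case: (mxrank_leqif_sup sub) => _ <-; rewrite eqn_leq mxrankS //= e0 //.
apply/sub_kermxP; apply: submx_trans sub2; exact/sub_kermxP.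
Qed.

Lemma ker_strict x y s s1 (v : 'rV[k]_(pdim M x y)) : (x <= s)%O -> (s <= s1)%O ->
  v *m mo x y s y != 0 -> v *m mo x y s1 y = 0 ->
  (\rank (kermx (mo x y s y)) < \rank (kermx (mo x y s1 y)))%N.
Proof.
move=> h1 h2 hv hv1.
have sub : (kermx (mo x y s y) <= kermx (mo x y s1 y))%MS.
  rewrite sub_kermx (@mo_comp x y s y s1 y) // mulmxA.
  by have /sub_kermxP -> := submx_refl (kermx (mo x y s y)); rewrite mul0mx.
rewrite (ltn_leqif (mxrank_leqif_sup sub)); apply/negP => h.
have : (v <= kermx (mo x y s y))%MS by apply: submx_trans h; exact/sub_kermxP.
by move/sub_kermxP; apply/eqP.
Qed.

Lemma ker_strict_v x y t t1 (v : 'rV[k]_(pdim M x y)) : (y <= t)%O -> (t <= t1)%O ->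
  v *m mo x y x t != 0 -> v *m mo x y x t1 = 0 ->
  (\rank (kermx (mo x y x t)) < \rank (kermx (mo x y x t1)))%N.
Proof.
move=> h1 h2 hv hv1.
have sub : (kermx (mo x y x t) <= kermx (mo x y x t1))%MS.
  rewrite sub_kermx (@mo_comp x y x t x t1) // mulmxA.
  by have /sub_kermxP -> := submx_refl (kermx (mo x y x t)); rewrite mul0mx.
rewrite (ltn_leqif (mxrank_leqif_sup sub)); apply/negP => h.
have : (v <= kermx (mo x y x t))%MS by apply: submx_trans h; exact/sub_kermxP.
by move/sub_kermxP; apply/eqP.
Qed.

Lemma choose_v x y x' y' (v : 'rV[k]_(pdim M x y)) : (x <= x')%O -> (y <= y')%O ->
  v != 0 -> v *m mo x y x y' = 0 -> v *m mo x y x' y = 0 ->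
  exists (v : 'rV[k]_(pdim M x y)) x1 y1, v != 0 /\ (x <= x1)%O /\ (y <= y1)%O /\
    v *m mo x y x1 y = 0 /\ v *m mo x y x y1 = 0 /\
    forall s t, (x <= s)%O -> (y <= t)%O -> v *m mo x y s y != 0 ->
      v *m mo x y x t != 0 -> v *m mo x y s t != 0.
Proof.
move=> hx hy v0 hv1 hv2.
pose Pr n := `[< exists (v : 'rV[k]_(pdim M x y)) s1 t1, v != 0 /\ (x <= s1)%O /\ (y <= t1)%O /\
    v *m mo x y s1 y = 0 /\ v *m mo x y x t1 = 0 /\
    (\rank (kermx (mo x y s1 y)) + \rank (kermx (mo x y x t1)))%N = n >].
have exP : exists n, Pr n.
  by eexists; apply/asboolP; exists v, x', y'; do !split.
case: (ex_minnP exP) => n0 /asboolP [w [s1 [t1 [w0 [hs1 [ht1 [ws1 [wt1 en]]]]]]]] hmin.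
exists w, s1, t1; do 5!(split => //); move=> s t hs ht aS aT; apply/eqP => dst.
have [z [ez1 ez2]] := split_sq hs ht dst.
have hss1 : (s <= s1)%O.
  case: (leP s s1) => // /ltW h; case/eqP: aS.
  by rewrite (@mo_comp x y s1 y s y) // mulmxA ws1 mul0mx.
have htt1 : (t <= t1)%O.
  case: (leP t t1) => // /ltW h; case/eqP: aT.
  by rewrite (@mo_comp x y x t1 x t) // mulmxA wt1 mul0mx.
have z0 : z != 0 by apply: contraNneq aT => e; rewrite -ez1 e mul0mx.
have zt1 : z *m mo x y x t1 = 0.
  by rewrite (@mo_comp x y x t x t1) // mulmxA ez1 -mulmxA -mo_comp.
have lt1 := ker_strict hs hss1 aS ws1.
have : (n0 <= \rank (kermx (mo x y s y)) + \rank (kermx (mo x y x t1)))%N.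
  by apply: hmin; apply/asboolP; exists z, s, t1; do !split => //; apply: le_trans htt1.
by rewrite -en leqNgt ltn_add2r lt1.
Qed.

End Basic.

Unset Implicit Arguments. Unset Strict Implicit. Unset Printing Implicit Defensive.
Import Order.TTheory GRing.Theory.
Local Open Scope ring_scope.

Section Main.
Variables (k : fieldType) (dS dT : Order.disp_t) (S : orderType dS) (T : orderType dT).
Variable M : pmod k S T.
Hypothesis pM : is_pmod M.
Hypothesis meM : middle_exact M.
Local Notation mo := (pmor M).
Variables (x0 x1 : S) (y0 y1 : T) (v : 'rV[k]_(pdim M x0 y0)).
Hypothesis v0 : v != 0.
Hypothesis hx1 : (x0 <= x1)%O.
Hypothesis hy1 : (y0 <= y1)%O.
Hypothesis dx1 : v *m mo x0 y0 x1 y0 = 0.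
Hypothesis dy1 : v *m mo x0 y0 x0 y1 = 0.
Hypothesis good : forall s t, (x0 <= s)%O -> (y0 <= t)%O -> v *m mo x0 y0 s y0 != 0 ->
      v *m mo x0 y0 x0 t != 0 -> v *m mo x0 y0 s t != 0.

Let mcomp := mo_comp pM.
Let mid := mo_id pM.

Definition JS (s : S) := (s <= x0)%O || (v *m mo x0 y0 s y0 != 0).
Definition JT (t : T) := (t <= y0)%O || (v *m mo x0 y0 x0 t != 0).

Lemma nJS s : ~~ JS s -> (x0 < s)%O /\ v *m mo x0 y0 s y0 = 0.
Proof. by rewrite /JS negb_or -ltNge negbK => /andP[h /eqP]. Qed.
Lemma nJT t : ~~ JT t -> (y0 < t)%O /\ v *m mo x0 y0 x0 t = 0.
Proof. by rewrite /JT negb_or -ltNge negbK => /andP[h /eqP]. Qed.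

Lemma JS_down s s' : (s' <= s)%O -> JS s -> JS s'.
Proof.
move=> hs; rewrite /JS; case/orP => [h|h]; first by rewrite (le_trans hs h).
case: (leP s' x0) => //= h'; apply: contra h => /eqP e.
by rewrite (@mcomp x0 y0 s' y0 s y0) // ?(ltW h') // mulmxA e mul0mx.
Qed.
Lemma JT_down t t' : (t' <= t)%O -> JT t -> JT t'.
Proof.
move=> ht; rewrite /JT; case/orP => [h|h]; first by rewrite (le_trans ht h).
case: (leP t' y0) => //= h'; apply: contra h => /eqP e.
by rewrite (@mcomp x0 y0 x0 t' x0 t) // ?(ltW h') // mulmxA e mul0mx.
Qed.
Lemma JS0 : JS x0. Proof. by rewrite /JS lexx. Qed.
Lemma JT0 : JT y0. Proof. by rewrite /JT lexx. Qed.

Lemma nJS_ex : exists s, ~~ JS s.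
Proof.
exists x1; rewrite /JS negb_or dx1 eqxx andbT -ltNge lt_neqAle hx1 andbT.
apply/eqP => e; move: dx1; rewrite -e mid mulmx1 => e'; by move: v0; rewrite e' eqxx.
Qed.
Lemma nJT_ex : exists t, ~~ JT t.
Proof.
exists y1; rewrite /JT negb_or dy1 eqxx andbT -ltNge lt_neqAle hy1 andbT.
apply/eqP => e; move: dy1; rewrite -e mid mulmx1 => e'; by move: v0; rewrite e' eqxx.
Qed.

Lemma alive s t : JS s -> JT t -> (x0 <= s)%O -> (y0 <= t)%O -> v *m mo x0 y0 s t != 0.
Proof.
move=> hs ht h1 h2; apply: good => //.
  case/orP: hs => // h; have -> : s = x0 by apply/le_anti; rewrite h h1.
  by rewrite mid mulmx1.
case/orP: ht => // h; have -> : t = y0 by apply/le_anti; rewrite h h2.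
by rewrite mid mulmx1.
Qed.

Definition I1 := {p : S * T | (p.1 <= x0)%O && (p.2 <= y0)%O}.
Definition le1 (i j : I1) := ((sval i).1 <= (sval j).1)%O /\ ((sval i).2 <= (sval j).2)%O.
Definition n1 (i : I1) := pdim M (sval i).1 (sval i).2.
Definition F1 (i j : I1) : 'M[k]_(n1 i, n1 j) := mo (sval i).1 (sval i).2 (sval j).1 (sval j).2.
Definition L1 (i : I1) (u : 'rV[k]_(n1 i)) :=
  u *m mo (sval i).1 (sval i).2 x0 y0 = v /\
  (forall s', ~~ JS s' -> u *m mo (sval i).1 (sval i).2 s' (sval i).2 = 0) /\
  (forall t', ~~ JT t' -> u *m mo (sval i).1 (sval i).2 (sval i).1 t' = 0).

Lemma I1P (i : I1) : ((sval i).1 <= x0)%O /\ ((sval i).2 <= y0)%O.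
Proof. by case: i => [[s t]] /= /andP. Qed.

Lemma L1_ne i : exists u, L1 i u.
Proof.
have [hs ht] := I1P i.
move: hs ht; rewrite /L1 /n1; case: (sval i) => s t /= hs ht.
have [s0 [Cs0 hs0]] := @stab_h _ _ _ _ _ M pM x0 t (fun s => ~~ JS s) nJS_ex
   (fun s' h => ltW (nJS _ h).1).
have [hs0a hs0b] := nJS _ Cs0.
have [u1 [e1 e2]] := lift_v meM (ltW hs0a) ht hs0b.
have u1v : forall t', ~~ JT t' -> u1 *m mo x0 t x0 t' = 0.
  move=> t' h; have [h1 h2] := nJT _ h.
  by rewrite (@mcomp x0 t x0 y0 x0 t') // ?(ltW h1) // mulmxA e1.
have [t0 [Ct0 ht0]] := @stab_v _ _ _ _ _ M pM s t (fun t => ~~ JT t) nJT_ex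
   (fun t' h => le_trans ht (ltW (nJT _ h).1)).
have [ht0a _] := nJT _ Ct0.
have [u2 [f1 f2]] := lift_h meM hs (le_trans ht (ltW ht0a)) (u1v _ Ct0).
exists u2; split; [|split].
- by rewrite (@mcomp s t x0 t x0 y0) // mulmxA f1 e1.
- move=> s' h; have [h1 _] := nJS _ h.
  rewrite (@mcomp s t x0 t s' t) // ?(le_trans hs (ltW h1)) // ?(ltW h1) // mulmxA f1.
  exact: (hs0 u1 e2 s' h).
- by move=> t' h; apply: (ht0 u2 f2 t' h).
Qed.

Lemma L1_aff i : affS (L1 i).
Proof.
have [hs ht] := I1P i; have [u hu] := L1_ne i.
move: u hu hs ht; rewrite /L1 /n1; case: (sval i) => s t /= u hu hs ht.
have [s0 [Cs0 hs0]] := @stab_h _ _ _ _ _ M pM s t (fun s => ~~ JS s) nJS_ex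
   (fun s' h => le_trans hs (ltW (nJS _ h).1)).
have [t0 [Ct0 ht0]] := @stab_v _ _ _ _ _ M pM s t (fun t => ~~ JT t) nJT_ex
   (fun t' h => le_trans ht (ltW (nJT _ h).1)).
pose Cm := row_mx (row_mx (mo s t x0 y0) (mo s t s0 t)) (mo s t s t0).
pose dv := row_mx (row_mx v (0 : 'rV_(pdim M s0 t))) (0 : 'rV_(pdim M s t0)).
have equiv : forall w : 'rV_(pdim M s t), w *m Cm = dv <->
   (w *m mo s t x0 y0 = v /\ (forall s', ~~ JS s' -> w *m mo s t s' t = 0) /\
    (forall t', ~~ JT t' -> w *m mo s t s t' = 0)).
  move=> w; rewrite /Cm /dv !mul_mx_row; split.
    case/eq_row_mx => /eq_row_mx [e1 e2] e3; split => //; split.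
      by move=> s' h; apply: hs0.
    by move=> t' h; apply: ht0.
  by case=> e1 [e2 e3]; rewrite e1 e2 ?e3.
apply: (aff_ext (P := fun w => w *m Cm = dv)).
  by move=> w; rewrite equiv.
by apply: aff_eqn; exists u; apply/equiv.
Qed.

Lemma L1_map i j u : le1 i j -> L1 i u -> L1 j (u *m F1 i j).
Proof.
have [hi1 hi2] := I1P i; have [hj1 hj2] := I1P j.
move: u hi1 hi2 hj1 hj2; rewrite /le1 /L1 /F1 /n1.
case: (sval i) => s t; case: (sval j) => s' t' /= u hi1 hi2 hj1 hj2 [h1 h2] [e1 [e2 e3]].
split; [|split].
- by rewrite -mulmxA -mcomp.
- move=> s'' h; have [h3 _] := nJS _ h.
  rewrite -mulmxA -(@mcomp s t s' t' s'' t') ?(le_trans hj1 (ltW h3)) //.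
  by rewrite (@mcomp s t s'' t s'' t') ?(le_trans hi1 (ltW h3)) // mulmxA (e2 _ h) mul0mx.
- move=> t'' h; have [h3 _] := nJT _ h.
  rewrite -mulmxA -(@mcomp s t s' t' s' t'') ?(le_trans hj2 (ltW h3)) //.
  by rewrite (@mcomp s t s t'' s' t'') ?(le_trans hi2 (ltW h3)) // mulmxA (e3 _ h) mul0mx.
Qed.

Lemma thread1 : exists u : forall i, 'rV[k]_(n1 i),
  (forall i, L1 i (u i)) /\ (forall i j, le1 i j -> u i *m F1 i j = u j).
Proof.
apply: (@thread k I1 le1 _ _ _ n1 F1 _ _ L1).
- by move=> i; split.
- by move=> i j l [h1 h2] [h3 h4]; split; [apply: le_trans h3|apply: le_trans h4].
- move=> i j; have [hi1 hi2] := I1P i.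
  pose p := (Order.min (sval i).1 (sval j).1, Order.min (sval i).2 (sval j).2).
  have hp : (p.1 <= x0)%O && (p.2 <= y0)%O by rewrite /= !ge_min hi1 hi2.
  by exists (exist _ p hp); rewrite /le1 /= !ge_min !lexx !orbT.
- by move=> i; rewrite /F1 mid.
- by move=> i j l [h1 h2] [h3 h4]; rewrite /F1 (mcomp _ _ (sval j).1 (sval j).2).
- exact: L1_aff.
- exact: L1_ne.
- exact: L1_map.
Qed.

Definition I2 := {p : S * T | [&& JS p.1, JT p.2, (x0 <= p.1)%O & (y0 <= p.2)%O]}.
Definition le2 (i j : I2) := ((sval j).1 <= (sval i).1)%O /\ ((sval j).2 <= (sval i).2)%O.
Definition n2 (i : I2) := pdim M (sval i).1 (sval i).2.
Definition F2 (i j : I2) : 'M[k]_(n2 i, n2 j) := (mo (sval j).1 (sval j).2 (sval i).1 (sval i).2)^T.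
Definition L2 (i : I2) (r : 'rV[k]_(n2 i)) :=
  r *m (v *m mo x0 y0 (sval i).1 (sval i).2)^T = 1%:M.

Lemma I2P (i : I2) : [/\ JS (sval i).1, JT (sval i).2, (x0 <= (sval i).1)%O & (y0 <= (sval i).2)%O].
Proof. by case: i => [[s t]] /= /and4P. Qed.

Lemma rv_inv n (w : 'rV[k]_n) : w != 0 -> exists r : 'rV_n, r *m w^T = 1%:M.
Proof.
move=> nz.
have [j hj] : exists j, w 0 j != 0.
  apply/existsP; move: nz; apply: contraR => /existsPn h; apply/eqP/rowP => j.
  by rewrite mxE; apply/eqP; move/negbNE: (h j).
exists ((w 0 j)^-1 *: delta_mx 0 j).
rewrite -scalemxAl -rowE; apply/matrixP => a b; rewrite !ord1 !mxE eqxx /=.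
by rewrite mulVf.
Qed.

Lemma L2_ne i : exists r, L2 i r.
Proof.
have [h1 h2 h3 h4] := I2P i; rewrite /L2 /n2.
by apply: rv_inv; apply: alive.
Qed.

Lemma L2_aff i : affS (L2 i).
Proof. by apply: aff_eqn; apply: L2_ne. Qed.

Lemma L2_map i j r : le2 i j -> L2 i r -> L2 j (r *m F2 i j).
Proof.
have [_ _ hi3 hi4] := I2P i; have [_ _ hj3 hj4] := I2P j.
move: r hi3 hi4 hj3 hj4; rewrite /le2 /L2 /F2 /n2.
case: (sval i) => s t; case: (sval j) => s' t' /= r hi3 hi4 hj3 hj4 [h1 h2] e.
by rewrite -mulmxA -trmx_mul -mulmxA -mcomp.
Qed.

Lemma maxI2 (i j : I2) :
  [&& JS (Order.max (sval i).1 (sval j).1), JT (Order.max (sval i).2 (sval j).2),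
      (x0 <= (Order.max (sval i).1 (sval j).1))%O & (y0 <= (Order.max (sval i).2 (sval j).2))%O].
Proof.
have [i1 i2 i3 i4] := I2P i; have [j1 j2 j3 j4] := I2P j.
rewrite !le_max i3 i4 /=; apply/andP; split.
  by case: (leP (sval i).1 (sval j).1).
by case: (leP (sval i).2 (sval j).2) => h //=; rewrite ?j2 ?i2.
Qed.

Lemma thread2 : exists c : forall i, 'rV[k]_(n2 i),
  (forall i, L2 i (c i)) /\ (forall i j, le2 i j -> c i *m F2 i j = c j).
Proof.
apply: (@thread k I2 le2 _ _ _ n2 F2 _ _ L2).
- by move=> i; split.
- by move=> i j l [h1 h2] [h3 h4]; split; [apply: le_trans h1|apply: le_trans h2].
- move=> i j.
  by exists (exist _ (Order.max (sval i).1 (sval j).1, Order.max (sval i).2 (sval j).2) (maxI2 i j)); rewrite /le2 /= !le_max !lexx !orbT.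
- by move=> i; rewrite /F2 mid trmx1.
- by move=> i j l [h1 h2] [h3 h4]; rewrite /F2 (mcomp _ _ (sval j).1 (sval j).2) // trmx_mul.
- exact: L2_aff.
- exact: L2_ne.
- exact: L2_map.
Qed.

Section Fam.
Variable u1 : forall i : I1, 'rV[k]_(n1 i).
Hypothesis hu1L : forall i, L1 i (u1 i).
Hypothesis hu1c : forall i j, le1 i j -> u1 i *m F1 i j = u1 j.
Variable c1 : forall i : I2, 'rV[k]_(n2 i).
Hypothesis hc1L : forall i, L2 i (c1 i).
Hypothesis hc1c : forall i j, le2 i j -> c1 i *m F2 i j = c1 j.

Definition a1 : I1 := exist _ (x0, y0) (introT andP (conj (lexx x0) (lexx y0))).
Definition mp x y : I1 := insubd a1 (Order.min x x0, Order.min y y0).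
Lemma mpE x y : sval (mp x y) = (Order.min x x0, Order.min y y0).
Proof. by rewrite /mp insubdK // -topredE /= !ge_min !lexx !orbT. Qed.

Definition wv x y : 'rV[k]_(pdim M x y) :=
  u1 (mp x y) *m mo (sval (mp x y)).1 (sval (mp x y)).2 x y.

Lemma mp_le x y : ((sval (mp x y)).1 <= x)%O /\ ((sval (mp x y)).2 <= y)%O.
Proof. by rewrite mpE /= !ge_min !lexx. Qed.
Lemma mp_le0 x y : ((sval (mp x y)).1 <= x0)%O /\ ((sval (mp x y)).2 <= y0)%O.
Proof. by rewrite mpE /= !ge_min !lexx !orbT. Qed.
Lemma mp_mono x y x' y' : (x <= x')%O -> (y <= y')%O -> le1 (mp x y) (mp x' y').
Proof.
move=> h1 h2; rewrite /le1 !mpE /= !le_min !ge_min !lexx !orbT !andbT.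
by rewrite h1 h2.
Qed.

Lemma W1 x y x' y' : (x <= x')%O -> (y <= y')%O -> wv x y *m mo x y x' y' = wv x' y'.
Proof.
move=> h1 h2; have hl := mp_mono _ _ _ _ h1 h2.
have [a b] := mp_le x y; have [c d] := mp_le x' y'.
rewrite /wv -(hu1c _ _ hl) /F1 -!mulmxA -(mcomp _ _ x y) // -mcomp //.
  by case: hl.
by case: hl.
Qed.

Lemma wv0 x y : ~~ (JS x && JT y) -> wv x y = 0.
Proof.
have [a b] := mp_le x y; have [_ [e2 e3]] := hu1L (mp x y).
rewrite negb_and => /orP [h|h]; rewrite /wv.
  have [h3 _] := nJS _ h.
  by rewrite (mcomp _ _ x (sval (mp x y)).2) // mulmxA e2 // mul0mx.
have [h3 _] := nJT _ h.
by rewrite (mcomp _ _ (sval (mp x y)).1 y) // mulmxA e3 // mul0mx.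
Qed.

Lemma W3 x y : (x0 <= x)%O -> (y0 <= y)%O -> wv x y = v *m mo x0 y0 x y.
Proof.
move=> h1 h2; have [a b] := mp_le0 x y; have [e1 _] := hu1L (mp x y).
by rewrite /wv (mcomp _ _ x0 y0) // mulmxA e1.
Qed.

Lemma JS_max x : JS x -> JS (Order.max x x0).
Proof. by move=> h; case: (leP x x0) => _; rewrite ?JS0. Qed.
Lemma JT_max y : JT y -> JT (Order.max y y0).
Proof. by move=> h; case: (leP y y0) => _; rewrite ?JT0. Qed.

Definition a2 : I2 := exist _ (x0, y0) (introT and4P (And4 JS0 JT0 (lexx x0) (lexx y0))).
Definition jp x y : I2 := insubd a2 (Order.max x x0, Order.max y y0).
Lemma jpE x y : JS x -> JT y -> sval (jp x y) = (Order.max x x0, Order.max y y0).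
Proof.
move=> h1 h2; rewrite /jp insubdK // -topredE /= JS_max // JT_max //=.
by rewrite !le_max !lexx !orbT.
Qed.

Definition cv x y : 'cV[k]_(pdim M x y) :=
  mo x y (sval (jp x y)).1 (sval (jp x y)).2 *m (c1 (jp x y))^T.

Lemma C1 x y x' y' : JS x' -> JT y' -> (x <= x')%O -> (y <= y')%O ->
  mo x y x' y' *m cv x' y' = cv x y.
Proof.
move=> j1 j2 h1 h2.
have j3 := JS_down _ _ h1 j1; have j4 := JT_down _ _ h2 j2.
have hl : le2 (jp x' y') (jp x y).
  rewrite /le2 (jpE _ _ j1 j2) (jpE _ _ j3 j4) /= !ge_max !le_max !lexx !orbT !andbT.
  by rewrite h1 h2.
have [a b] : ((sval (jp x y)).1 <= (sval (jp x' y')).1)%O /\ ((sval (jp x y)).2 <= (sval (jp x' y')).2)%O.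
  by case: hl.
have [c d] : (x <= (sval (jp x y)).1)%O /\ (y <= (sval (jp x y)).2)%O.
  by rewrite (jpE _ _ j3 j4) /= !le_max !lexx.
have [e f] : (x' <= (sval (jp x' y')).1)%O /\ (y' <= (sval (jp x' y')).2)%O.
  by rewrite (jpE _ _ j1 j2) /= !le_max !lexx.
rewrite /cv -(hc1c _ _ hl) /F2 trmx_mul trmxK !mulmxA -!mcomp //.
Qed.

Lemma C2 x y : JS x -> JT y -> wv x y *m cv x y = 1%:M.
Proof.
move=> j1 j2.
have [i1 i2 i3 i4] := I2P (jp x y).
have [c d] : (x <= (sval (jp x y)).1)%O /\ (y <= (sval (jp x y)).2)%O.
  by rewrite (jpE _ _ j1 j2) /= !le_max !lexx.
rewrite /cv mulmxA W1 // W3 //.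
by rewrite -[LHS]trmxK trmx_mul trmxK hc1L trmx1.
Qed.

Definition Wm x y : 'M[k]_(pdim (kB k JS JT) x y, pdim M x y) := \matrix_(i, j) (locked (wv x y)) 0 j.
Definition Cm x y : 'M[k]_(pdim M x y, pdim (kB k JS JT) x y) := \matrix_(i, j) (locked (cv x y)) i 0.

Lemma inB x y (i : 'I_(pdim (kB k JS JT) x y)) : JS x && JT y.
Proof. move: (nat_of_ord i) (ltn_ord i) => m; rewrite /=; case: ifP => // _; by rewrite ltn0. Qed.

Lemma homW : @pmod_hom _ _ _ _ _ (kB k JS JT) M Wm.
Proof.
move=> x y x' y' h1 h2; apply/matrixP => i j.
have hp := inB _ _ i.
rewrite !mxE.
under eq_bigr => l _ do rewrite !mxE.
under [RHS]eq_bigr => l _ do rewrite !mxE.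
rewrite sumr_const card_ord.
have e : (locked (wv x y) *m mo x y x' y') 0 j = \sum_l (locked (wv x y)) 0 l * mo x y x' y' l j by rewrite mxE.
rewrite -e -!lock W1 //.
case/andP: (hp) => -> -> /=.
case hq: (JS x' && JT y') => /=.
  by rewrite mul1r.
by rewrite mulr0n (wv0 x' y') ?hq // mxE.
Qed.

Lemma homC : @pmod_hom _ _ _ _ _ M (kB k JS JT) Cm.
Proof.
move=> x y x' y' h1 h2; apply/matrixP => i j.
have hq := inB _ _ j; case/andP: (hq) => q1 q2.
have p1 := JS_down _ _ h1 q1; have p2 := JT_down _ _ h2 q2.
rewrite !mxE.
under eq_bigr => l _ do rewrite !mxE.
under [RHS]eq_bigr => l _ do rewrite !mxE.
rewrite sumr_const card_ord.
have e : (mo x y x' y' *m locked (cv x' y')) i 0 = \sum_l mo x y x' y' i l * (locked (cv x' y')) l 0 by rewrite mxE.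
rewrite -e -!lock C1 // p1 p2 q1 q2 /=.
by rewrite p1 p2 mulr1.
Qed.

Lemma ordI1 n (i j : 'I_n) : (n <= 1)%N -> i = j.
Proof.
move=> hn; apply: val_inj => /=.
have hi := leq_trans (ltn_ord i) hn; have hj := leq_trans (ltn_ord j) hn.
by move: hi hj; rewrite !ltnS !leqn0 => /eqP -> /eqP ->.
Qed.

Lemma WCm x y : Wm x y *m Cm x y = 1%:M.
Proof.
apply/matrixP => i j.
have hp := inB _ _ i.
rewrite !mxE.
under eq_bigr => l _ do rewrite !mxE.
have e : (locked (wv x y) *m locked (cv x y)) 0 0 = \sum_l (locked (wv x y)) 0 l * (locked (cv x y)) l 0 by rewrite mxE.
case/andP: (hp) => p1 p2.
rewrite -e -!lock C2 // !mxE.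
have -> : i = j by apply: ordI1; rewrite /=; case: ifP.
by rewrite !eqxx.
Qed.

End Fam.

Lemma kB_pmod : is_pmod (kB k JS JT).
Proof.
split.
  move=> x y; apply/matrixP => i j.
  have hp := inB _ _ i; rewrite !mxE; case/andP: (hp) => p1 p2; rewrite p1 p2 /=.
  have -> : i = j by apply: ordI1; rewrite /=; case: ifP.
  by rewrite eqxx.
move=> x y x' y' x'' y'' h1 h2 h3 h4; apply/matrixP => i j.
have /andP[p1 p2] := inB _ _ i; have /andP[r1 r2] := inB _ _ j.
have q1 := JS_down _ _ h2 r1; have q2 := JT_down _ _ h4 r2.
rewrite !mxE.
under eq_bigr => l _ do rewrite !mxE.
by rewrite sumr_const card_ord /= p1 p2 q1 q2 r1 r2 /= mulr1.
Qed.

Lemma kB_nz : ~ pmod_zero (kB k JS JT).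
Proof. by move=> /(_ x0 y0); rewrite /= JS0 JT0. Qed.

Lemma kB_db : db_block JS JT.
Proof.
split; first by exists x0; exact: JS0.
split; first by move=> s s' h; exact: JS_down.
split; first by exists y0; exact: JT0.
by move=> t t' h; exact: JT_down.
Qed.

End Main.

Set Implicit Arguments. Unset Strict Implicit. Unset Printing Implicit Defensive.
Import Order.TTheory GRing.Theory.
Local Open Scope ring_scope.

Theorem lemma5p5 (k : fieldType) (dS dT : Order.disp_t)
  (S : orderType dS) (T : orderType dT) (M : pmod k S T) :
  is_pmod M -> middle_exact M -> indecomposable M ->
  (exists (x x' : S) (y y' : T), (x <= x')%O /\ (y <= y')%O /\
     exists v : 'rV[k]_(pdim M x y),
       v != 0 /\ v *m pmor M x y x y' = 0 /\ v *m pmor M x y x' y = 0) ->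
  exists (JS : S -> bool) (JT : T -> bool),
    db_block JS JT /\ pmod_iso M (kB k JS JT).
Proof.
move=> pM meM ind [x [x' [y [y' [hx [hy [v [v0 [e1 e2]]]]]]]]].
have [w [x1 [y1 [w0 [hx1 [hy1 [d1 [d2 gd]]]]]]]] := choose_v pM meM hx hy v0 e1 e2.
have [u1 [hu1L hu1c]] := thread1 _ _ _ _ _ _ pM meM _ _ _ _ _ w0 hx1 hy1 d1 d2.
have [c1 [hc1L hc1c]] := thread2 _ _ _ _ _ _ pM _ _ _ w0 gd.
exists (JS k dS dT S T M x y w), (JT k dS dT S T M x y w); split.
  exact: (kB_db _ _ _ _ _ _ pM).
apply: (retract_iso (homW _ _ _ _ _ _ pM _ _ _ _ hu1L hu1c) (homC _ _ _ _ _ _ pM _ _ _ _ hc1c) (WCm _ _ _ _ _ _ pM _ _ _ _ hu1L hu1c _ hc1L)) => //.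
- exact: (kB_pmod _ _ _ _ _ _ pM).
- exact: kB_nz.
Qed.
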